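(* Let $T=\bigoplus_{i=1}^{n-1}T_i$ be a basic maximal rigid object in $\mathcal{C}_n$ and $T_k$ one of its indecomposable summands. (i) Exactly $\operatorname{ql}T_k$ of the indecomposable summands of $T$ lie in $\mathcal{W}_{T_k}$. (ii) If $\operatorname{ql}T_k>1$, there is a subwing triple $(T_k;T_{k'},T_{k''})$ such that each of $T_{k'},T_{k''}$ is either a summand of $T$ or zero, all indecomposable summands of $T$ other than $T_k$ that lie in $\mathcal{W}_{T_k}$ lie in $\mathcal{W}_{T_{k'}}\cup\mathcal{W}_{T_{k''}}$, and exactly $\operatorname{ql}T_{k'}$ of them lie in $\mathcal{W}_{T_{k'}}$ and exactly $\operatorname{ql}T_{k''}$ lie in $\mathcal{W}_{T_{k''}}$.
   Context: Let $k$ be algebraically closed, $n\ge2$, $\mathcal{T}_n$ the tube of rank $n$ (finite-dimensional nilpotent representations of the cyclically oriented $\tilde A_{n-1}$-quiver; AR-translation $\tau$), $\mathcal{C}_n=D^b(\mathcal{T}_n)/\tau^{-1}[1]$ the cluster tube, with indecomposables identified with those of $\mathcal{T}_n$. Indecomposables have coordinates $(a,b)$, $a\in\mathbb{Z}/n$, $b\ge1$ the quasilength $\operatorname{ql}$, with $\tau(a,b)=(a-1,b)$ and irreducible maps $(a,b)\to(a,b+1)$ and $(a,b)\to(a+1,b-1)$. For $X=(a,i)$, $i\le n-1$, the wing $\mathcal{W}_X$ is $\{(a+s,i'):s\ge0,i'\ge1,s+i'\le i\}$; $\mathcal{W}_0=\emptyset$ and $\operatorname{ql}0=0$. $T$ is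 maximal rigid if $\operatorname{Ext}^1_{\mathcal{C}_n}(T,T)=0$ and $\operatorname{Ext}^1(T\oplus X,T\oplus X)=0$ implies $X\in\operatorname{add}T$; a basic maximal rigid object has $n-1$ pairwise non-isomorphic indecomposable summands, a unique one (the top summand) of quasilength $n-1$, and all lie in its wing. A non-degenerate subwing triple $(X;Y,Z)$: $X=(a,b)$ with $3\le b\le n-1$, $Y=(a,c)$, $Z=(a+c+1,b-c-1)$ for some $1\le c\le b-2$. A degenerate subwing triple $(X;Y,Z)$: $X=(a,b)$, $2\le b\le n-1$, and either $Y=(a,b-1)$, $Z=0$, or $Y=0$, $Z=(a+1,b-1)$. *)

(* Defs.v *)
From mathcomp Require Import all_boot.
Set Implicit Arguments. Unset Strict Implicit. Unset Printing Implicit Defensive.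

(* Indecomposable objects of the tube T_n (= of the cluster tube C_n):
   coordinates (a,b), a in Z/n (represented by 'I_n), b >= 1 the quasilength. *)
Definition indec (n : nat) := {p : 'I_n * nat | 0 < p.2}.

Section Tube.
Variable n : nat.

Definition qpos (X : indec n) : nat := val (sval X).1.
Definition ql (X : indec n) : nat := (sval X).2.

(* The indecomposable (a,b) is the uniserial
   nilpotent representation with quasi-socle (a,1) and quasi-top (a+b-1,1);
   its quotients are (a+j,b-j), 0<=j<b, and the submodules of (c,d) are
   (c,d'), 1<=d'<=d.  A basis of Hom((a,b),(c,d)) is indexed by the j with
   (a+j,b-j) isomorphic to a submodule of (c,d), i.e. a+j = c (mod n) and
   b-j <= d. *)
Definition homdim (a b c d : nat) : nat :=
  count (fun j => ((a + j) %% n == c %% n) && (b - j <= d)) (iota 0 b).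

Definition tau_pos (a : nat) : nat := (a + n.-1) %% n.

(* dim Ext^1_{C_n}(X,Y) = dim Ext^1_T(X,Y) + dim Ext^1_T(Y,X)
                        = dim Hom_T(Y, tau X) + dim Hom_T(X, tau Y)
   (C_n = D^b(T_n)/tau^{-1}[1], T_n hereditary, AR formula). *)
Definition ext1dim (X Y : indec n) : nat :=
  homdim (qpos Y) (ql Y) (tau_pos (qpos X)) (ql X) +
  homdim (qpos X) (ql X) (tau_pos (qpos Y)) (ql Y).

(* Objects of C_n: finite direct sums of indecomposables, i.e. sequences
   (with multiplicity); the zero object is [::]. *)
Definition ext_vanish (A B : seq (indec n)) : bool :=
  all (fun X => all (fun Y => ext1dim X Y == 0) B) A.

Definition rigid (T : seq (indec n)) : bool := ext_vanish T T.

Definition in_add (X T : seq (indec n)) : bool := all (fun x => x \in T) X.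

Definition maximal_rigid (T : seq (indec n)) : Prop :=
  rigid T /\ forall X : seq (indec n), ext_vanish (T ++ X) (T ++ X) -> in_add X T.

Definition basic (T : seq (indec n)) : bool := uniq T.

(* Y lies in the wing W_X (defined for X = (a,i), i <= n-1):
   Y = (a+s, i') with s >= 0, i' >= 1, s + i' <= i.
   (s < n automatically since s + i' <= i <= n-1.) *)
Definition in_wing (X Y : indec n) : bool :=
  (ql X <= n.-1) &&
  [exists s : 'I_n, (s + ql Y <= ql X) && (qpos Y == (qpos X + s) %% n)].

(* possibly-zero indecomposable: None = 0 *)
Definition qlo (Y : option (indec n)) : nat :=
  if Y is Some y then ql y else 0.
Definition in_wingo (Y : option (indec n)) (Z : indec n) : bool :=
  if Y is Some y then in_wing y Z else false.

Definition is_ind (Y : option (indec n)) (a b : nat) : Prop :=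
  exists2 y, Y = Some y & qpos y = a %% n /\ ql y = b.

Definition nondeg_subwing_triple (X : indec n) (Y Z : option (indec n)) : Prop :=
  3 <= ql X <= n.-1 /\
  exists c, [/\ 1 <= c <= ql X - 2, is_ind Y (qpos X) c &
               is_ind Z (qpos X + c + 1) (ql X - c - 1)].

Definition deg_subwing_triple (X : indec n) (Y Z : option (indec n)) : Prop :=
  2 <= ql X <= n.-1 /\
  ((is_ind Y (qpos X) (ql X - 1) /\ Z = None) \/
   (Y = None /\ is_ind Z (qpos X + 1) (ql X - 1))).

Definition subwing_triple (X : indec n) (Y Z : option (indec n)) : Prop :=
  nondeg_subwing_triple X Y Z \/ deg_subwing_triple X Y Z.

Definition summand_or_zero (T : seq (indec n)) (Y : option (indec n)) : Prop :=
  if Y is Some y then y \in T else True.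

End Tube.

(* Main.v *)
Require Import Defs.
From mathcomp Require Import all_boot zify.
Set Implicit Arguments. Unset Strict Implicit. Unset Printing Implicit Defensive.

Definition lcompat (p q : nat * nat) : bool :=
  ~~ [&& q.1 < p.1, p.1 <= q.1 + q.2 & q.1 + q.2 < p.1 + p.2] &&
  ~~ [&& p.1 < q.1, q.1 <= p.1 + p.2 & p.1 + p.2 < q.1 + q.2].
Definition inseg (a m : nat) (p : nat * nat) : bool :=
  [&& a <= p.1, p.1 + p.2 <= a + m & 0 < p.2].
Definition lfam (a m : nat) (F : seq (nat * nat)) : Prop :=
  [/\ uniq F, all (inseg a m) F & {in F &, forall p q, lcompat p q}].

Lemma lcompat_sym p q : lcompat p q = lcompat q p.
Proof. by rewrite /lcompat andbC. Qed.
Lemma lcompat_refl p : lcompat p p.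
Proof. case: p => a b; rewrite /lcompat /=; lia. Qed.
Lemma lcompat_nest p q : p.1 <= q.1 -> q.1 + q.2 <= p.1 + p.2 -> lcompat p q.
Proof. case: p q => [a b] [c d] /= *; rewrite /lcompat /=; lia. Qed.
Lemma lcompat_sep p q : p.1 + p.2 < q.1 -> lcompat p q.
Proof. case: p q => [a b] [c d] /= *; rewrite /lcompat /=; lia. Qed.

Lemma maxstart a (F : seq (nat * nat)) :
  exists c, (c = 0 \/ (a, c) \in F) /\ forall p, p \in F -> p.1 = a -> p.2 <= c.
Proof.
elim: F => [|q F [c [Hc Hm]]]; first by exists 0; split; [left|].
case: (boolP ((q.1 == a) && (c < q.2))) => [/andP[/eqP Hq Hlt]|Hn].
- exists q.2; split.
    by right; rewrite in_cons -Hq; case: q {Hlt Hq} => ??; rewrite eqxx.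
  move=> p; rewrite in_cons => /orP[/eqP->//|Hp] Hpa. have := Hm p Hp Hpa. lia.
- exists c; split.
    by case: Hc => [->|H]; [left| right; rewrite in_cons H orbT].
  move=> p; rewrite in_cons => /orP[/eqP->|Hp] Hpa; last exact: Hm.
  move: Hn; rewrite Hpa eqxx /=; lia.
Qed.

Lemma decomp a m F : lfam a m F -> (a, m) \notin F -> 0 < m ->
  exists c, [/\ c < m, (0 < c -> (a, c) \in F) &
    forall p, p \in F -> inseg a c p || inseg (a + c + 1) (m - c - 1) p].
Proof.
move=> [Hu Hall Hc] Hnot m0.
have [c [Hc0 Hmax]] := maxstart a F.
exists c; split.
- case: Hc0 => [->//|H]. have := allP Hall _ H; rewrite /inseg /= => /and3P[_ H1 _].
  have : c != m by apply: contraNneq Hnot => <-. lia.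
- by case: Hc0 => [->|].
- move=> [s l] Hp. have := allP Hall _ Hp; rewrite /inseg /= => /and3P[H1 H2 H3].
  case: (eqVneq s a) => [Hsa|Hsa].
  + have := Hmax _ Hp Hsa. rewrite /= => Hle. apply/orP; left. rewrite /inseg /=. lia.
  + case: Hc0 => [Hc0|Hin].
    * apply/orP; right; rewrite /inseg /=; lia.
    * have := Hc _ _ Hin Hp. rewrite /lcompat /= => H. rewrite /inseg /=. lia.
Qed.

Lemma count_split (T : Type) (P1 P2 : pred T) (s : seq T) :
  all (fun x => P1 x || P2 x) s -> (forall x, ~~ (P1 x && P2 x)) ->
  size s = count P1 s + count P2 s.
Proof.
move=> H1 H2. elim: s H1 => //= x s IH /andP[Hx H].
rewrite IH //.
move: Hx. have := H2 x. case: (P1 x); case: (P2 x) => //=; lia.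
Qed.

Lemma inseg_disj a c m p : ~~ (inseg a c p && inseg (a + c + 1) (m - c - 1) p).
Proof. case: p => s l; rewrite /inseg /=; lia. Qed.

Lemma lfam_filter a m F a' m' (P : pred (nat * nat)) :
  lfam a m F -> (forall p, p \in F -> P p -> inseg a' m' p) -> lfam a' m' (filter P F).
Proof.
move=> [Hu Hall Hc] H; split.
- exact: filter_uniq.
- apply/allP => p; rewrite mem_filter => /andP[Hp HF]; exact: H.
- move=> p q; rewrite !mem_filter => /andP[_ Hp] /andP[_ Hq]; exact: Hc.
Qed.

Lemma size_rem1 (F : seq (nat * nat)) x : uniq F ->
  size F = size (filter (predC1 x) F) + (x \in F).
Proof.
move=> Hu. rewrite size_filter -(count_uniq_mem x Hu) -(count_predC (pred1 x) F) addnC.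
congr addn.
Qed.

Lemma bound m : forall a F, lfam a m F -> size F <= m.
Proof.
elim/ltn_ind: m => m IH a F HF.
have [Hu Hall Hc] := HF.
case: (posnP m) => [m0|mpos].
  case: F Hall {HF Hu Hc} => // p F /=; rewrite m0 /inseg => /andP[/and3P[]] *; lia.
set F' := filter (predC1 (a, m)) F.
have HF' : lfam a m F'.
  apply: lfam_filter HF _ => p Hp _; exact: (allP Hall).
have Hn : (a, m) \notin F' by rewrite mem_filter /= eqxx.
have [c [Hcm _ Hsplit]] := decomp HF' Hn mpos.
have Hs := size_rem1 (a, m) Hu. rewrite -/F' in Hs.
have Hall2 : all (fun x => inseg a c x || inseg (a + c + 1) (m - c - 1) x) F' by apply/allP.
rewrite (@count_split (nat * nat) _ _ F' Hall2 (@inseg_disj a c m)) in Hs.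
have H1 : count (inseg a c) F' <= c.
  rewrite -size_filter; apply: (IH c Hcm a). by apply: (lfam_filter HF') => ? _.
have H2 : count (inseg (a + c + 1) (m - c - 1)) F' <= m - c - 1.
  rewrite -size_filter; apply: (IH _ _ (a + c + 1)); first lia. by apply: (lfam_filter HF') => ? _.
have := leq_b1 ((a, m) \in F). lia.
Qed.

Lemma lcompat_in a m p : inseg a m p -> lcompat (a, m) p.
Proof. case: p => s l; rewrite /inseg /= => H; apply: lcompat_nest => /=; lia. Qed.

Lemma extend m : forall a F, lfam a m F -> size F < m ->
  exists q, [/\ inseg a m q, q \notin F & forall p, p \in F -> lcompat q p].
Proof.
elim/ltn_ind: m => m IH a F HF Hsz.
have [Hu Hall Hc] := HF.
have mpos : 0 < m by lia.
case: (boolP ((a, m) \in F)) => Ham; last first.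
  exists (a, m); split => //; first by rewrite /inseg /=; lia.
  move=> p Hp; apply: lcompat_in; exact: (allP Hall).
set F' := filter (predC1 (a, m)) F.
have HF' : lfam a m F'.
  apply: lfam_filter HF _ => p Hp _; exact: (allP Hall).
have Hn : (a, m) \notin F' by rewrite mem_filter /= eqxx.
have [c [Hcm _ Hsplit]] := decomp HF' Hn mpos.
have Hs := size_rem1 (a, m) Hu. rewrite -/F' Ham in Hs.
have Hall2 : all (fun x => inseg a c x || inseg (a + c + 1) (m - c - 1) x) F' by apply/allP.
rewrite (@count_split (nat * nat) _ _ F' Hall2 (@inseg_disj a c m)) in Hs.
have HF1 : lfam a c (filter (inseg a c) F') by apply: (lfam_filter HF') => ? _.
have HF2 : lfam (a + c + 1) (m - c - 1) (filter (inseg (a + c + 1) (m - c - 1)) F')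
  by apply: (lfam_filter HF') => ? _.
have H1 := bound HF1. have H2 := bound HF2. rewrite !size_filter in H1 H2.
have memF : forall q, q \in F = (q == (a, m)) || (q \in F').
  move=> q; rewrite mem_filter /=; case: eqP => [->|] //=.
case: (ltnP (count (inseg a c) F') c) => Hlt.
- rewrite -size_filter in Hlt.
  have [q [Hq1 Hq2 Hq3]] := IH c Hcm a _ HF1 Hlt.
  exists q; split.
  + move: Hq1; case: q {Hq2 Hq3} => s l; rewrite /inseg /=; lia.
  + rewrite memF negb_or; apply/andP; split.
      apply/eqP => E; move: Hq1; rewrite E /inseg /=; lia.
    apply: contra Hq2 => Hq; by rewrite mem_filter Hq1.
  + move=> p; rewrite memF => /orP[/eqP->|Hp].
      by rewrite lcompat_sym; apply: lcompat_in; move: Hq1; case: q {Hq2 Hq3} => s l;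
         rewrite /inseg /=; lia.
    have := allP Hall2 p Hp => /orP[Hp1|Hp2].
      by apply: Hq3; rewrite mem_filter Hp1.
    apply: lcompat_sep; move: Hq1 Hp2; case: q {Hq2 Hq3} => s l; case: p {Hp} => s' l';
      rewrite /inseg /=; lia.
- have Hlt2 : count (inseg (a + c + 1) (m - c - 1)) F' < m - c - 1 by lia.
  rewrite -size_filter in Hlt2.
  have [q [Hq1 Hq2 Hq3]] := IH (m - c - 1) ltac:(lia) (a + c + 1) _ HF2 Hlt2.
  exists q; split.
  + move: Hq1; case: q {Hq2 Hq3} => s l; rewrite /inseg /=; lia.
  + rewrite memF negb_or; apply/andP; split.
      apply/eqP => E; move: Hq1; rewrite E /inseg /=; lia.
    apply: contra Hq2 => Hq; by rewrite mem_filter Hq1.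
  + move=> p; rewrite memF => /orP[/eqP->|Hp].
      by rewrite lcompat_sym; apply: lcompat_in; move: Hq1; case: q {Hq2 Hq3} => s l;
         rewrite /inseg /=; lia.
    have := allP Hall2 p Hp => /orP[Hp1|Hp2].
      rewrite lcompat_sym; apply: lcompat_sep; move: Hq1 Hp1; case: q {Hq2 Hq3} => s l;
      case: p {Hp} => s' l'; rewrite /inseg /=; lia.
    by apply: Hq3; rewrite mem_filter Hp2.
Qed.

Lemma structure b F : lfam 0 b F -> size F = b -> (0, b) \in F ->
  exists c, [/\ c < b, (0 < c -> (0, c) \in F),
    (0 < b - c - 1 -> (0 + c + 1, b - c - 1) \in F) &
    forall p, p \in F -> p != (0, b) -> inseg 0 c p || inseg (0 + c + 1) (b - c - 1) p].
Proof.
move=> HF Hsz Hb.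
have [Hu Hall Hc] := HF.
have mpos : 0 < b by move: (allP Hall _ Hb); rewrite /inseg /=; lia.
set F' := filter (predC1 (0, b)) F.
have HF' : lfam 0 b F'.
  apply: lfam_filter HF _ => p Hp _; exact: (allP Hall).
have Hn : (0, b) \notin F' by rewrite mem_filter /= eqxx.
have [c [Hcm Hc1 Hsplit]] := decomp HF' Hn mpos.
have Hs := size_rem1 (0, b) Hu. rewrite -/F' Hb in Hs.
have Hall2 : all (fun x => inseg 0 c x || inseg (0 + c + 1) (b - c - 1) x) F' by apply/allP.
rewrite (@count_split (nat * nat) _ _ F' Hall2 (@inseg_disj 0 c b)) in Hs.
have HF1 : lfam 0 c (filter (inseg 0 c) F') by apply: (lfam_filter HF') => ? _.
have H1 := bound HF1. rewrite size_filter in H1.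
have memF : forall q, q \in F' = (q != (0, b)) && (q \in F) by move=> q; rewrite mem_filter.
exists c; split => //.
- by move=> /Hc1; rewrite memF => /andP[].
- move=> Hpos. apply/negPn/negP => Hz.
  set F2 := filter (inseg (0 + c + 1) (b - c - 1)) F'.
  have HF2 : lfam (0 + c + 1) (b - c - 1) ((0 + c + 1, b - c - 1) :: F2).
    have [Hu2 Hall2' Hc2] : lfam (0 + c + 1) (b - c - 1) F2 by apply: (lfam_filter HF') => ? _.
    split.
    + rewrite /= Hu2 andbT; apply: contra Hz; rewrite mem_filter => /andP[_].
      by rewrite memF => /andP[].
    + by rewrite /= Hall2' andbT /inseg /=; lia.
    + move=> p q; rewrite !in_cons => /orP[/eqP->|Hp] /orP[/eqP->|Hq].
      * exact: lcompat_refl.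
      * apply: lcompat_nest; move: (allP Hall2' q Hq); case: q {Hq} => s l; rewrite /inseg /=; lia.
      * rewrite lcompat_sym; apply: lcompat_nest;
        move: (allP Hall2' p Hp); case: p {Hp} => s l; rewrite /inseg /=; lia.
      * exact: Hc2.
  have := bound HF2. rewrite /= /F2 size_filter. lia.
- move=> p Hp Hpb. apply: (allP Hall2). by rewrite memF Hpb.
Qed.
Definition rpos n (t : nat) (Y : indec n) : nat := (qpos Y + (n - t)) %% n.

Lemma qpos_lt n (Y : indec n) : qpos Y < n. Proof. exact: ltn_ord. Qed.
Lemma ql_gt0 n (Y : indec n) : 0 < ql Y. Proof. exact: (valP Y). Qed.

Lemma indec_eq n (X Y : indec n) : qpos X = qpos Y -> ql X = ql Y -> X = Y.
Proof.
case: X Y => [[a b] Hx] [[c d] Hy]; rewrite /qpos /ql /= => H1 H2.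
apply: val_inj => /=. congr pair; [exact: val_inj | done].
Qed.

Lemma modn_2 n x : n <= x < 2 * n -> x %% n = x - n.
Proof. move=> H; rewrite -{1}(subnK (_ : n <= x)) ?modnDr ?modn_small; lia. Qed.

Lemma L2 n x y : x < 2 * n -> y < 2 * n -> x %% n = y %% n ->
  x = y \/ x + n = y \/ y + n = x.
Proof.
move=> Hx Hy.
have Ex : x %% n = if x < n then x else x - n.
  by case: ltnP => H; [rewrite modn_small | rewrite modn_2]; lia.
have Ey : y %% n = if y < n then y else y - n.
  by case: ltnP => H; [rewrite modn_small | rewrite modn_2]; lia.
rewrite Ex Ey; case: (ltnP x n); case: (ltnP y n) => *; lia.
Qed.

Lemma modU n t s : t < n -> s < n -> ((t + s) %% n + (n - t)) %% n = s.
Proof.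
move=> Ht Hs; rewrite modnDml.
have -> : t + s + (n - t) = s + n by lia.
by rewrite modnDr modn_small.
Qed.

Lemma qposE n t (Y : indec n) : t < n -> qpos Y = (t + rpos t Y) %% n.
Proof.
move=> Ht; rewrite /rpos modnDmr.
have -> : t + (qpos Y + (n - t)) = qpos Y + n by lia.
by rewrite modnDr modn_small // qpos_lt.
Qed.

Lemma rpos_lt n t (Y : indec n) : rpos t Y < n.
Proof. rewrite /rpos ltn_mod; have := qpos_lt Y; lia. Qed.

Lemma rpos_self n (Y : indec n) : rpos (qpos Y) Y = 0.
Proof. rewrite /rpos subnKC ?modnn //; have := qpos_lt Y; lia. Qed.

Lemma rpos_mk n t s (Y : indec n) : t < n -> s < n -> qpos Y = (t + s) %% n -> rpos t Y = s.
Proof. move=> Ht Hs Hq; by rewrite /rpos Hq modU. Qed.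

Lemma modeqH n t u v j :
  (((t + u) %% n + j) %% n == (((t + v) %% n + n.-1) %% n) %% n) =
  (u + j == v + n.-1 %[mod n]).
Proof. by rewrite modn_mod !modnDml -!addnA eqn_modDl. Qed.

Lemma homdim_pos n a b c d :
  reflect (exists2 j, j < b & ((a + j) %% n == c %% n) && (b - j <= d))
          (0 < homdim n a b c d).
Proof.
rewrite /homdim -has_count; apply: (iffP hasP) => [[j]|[j]].
  by rewrite mem_iota => H1 H2; exists j => //; lia.
by move=> H1 H2; exists j => //; rewrite mem_iota; lia.
Qed.

Lemma hom_rel n t (Y X : indec n) : t < n ->
  reflect (exists2 j, j < ql Y &
             (rpos t Y + j == rpos t X + n.-1 %[mod n]) && (ql Y - j <= ql X))
          (0 < homdim n (qpos Y) (ql Y) (tau_pos n (qpos X)) (ql X)).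
Proof.
move=> Ht; rewrite (qposE Y Ht) (qposE X Ht).
apply: (iffP (homdim_pos _ _ _ _ _)) => [[j H1 H2]|[j H1 H2]]; exists j => //.
  by rewrite /tau_pos modeqH in H2.
by rewrite /tau_pos modeqH.
Qed.

Lemma cross n t (Y X : indec n) b : t < n -> rpos t Y + ql Y <= b ->
  rpos t X + ql X <= b -> b <= n.-1 ->
  (0 < homdim n (qpos Y) (ql Y) (tau_pos n (qpos X)) (ql X)) =
  [&& rpos t Y < rpos t X, rpos t X <= rpos t Y + ql Y & rpos t Y + ql Y < rpos t X + ql X].
Proof.
move=> Ht HY HX Hb; have r1 := rpos_lt t Y; have r2 := rpos_lt t X.
apply/(hom_rel Y X Ht)/idP.
- move=> [j Hj /andP[/eqP Hm Hl]].
  have := @L2 n (rpos t Y + j) (rpos t X + n.-1) ltac:(lia) ltac:(lia) Hm. move=> [|[|]]; lia.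
- move=> H; exists (rpos t X - rpos t Y - 1); first lia.
  apply/andP; split; last lia.
  have -> : rpos t X + n.-1 = rpos t Y + (rpos t X - rpos t Y - 1) + n by lia.
  by rewrite modnDr.
Qed.

Lemma ext_rel n t (Y1 Y2 : indec n) b : t < n -> rpos t Y1 + ql Y1 <= b ->
  rpos t Y2 + ql Y2 <= b -> b <= n.-1 ->
  (ext1dim Y1 Y2 == 0) = lcompat (rpos t Y1, ql Y1) (rpos t Y2, ql Y2).
Proof.
move=> Ht H1 H2 Hb.
rewrite /ext1dim addn_eq0 !eqn0Ngt (cross Ht H2 H1 Hb) (cross Ht H1 H2 Hb).
by rewrite /lcompat.
Qed.

Lemma ext1dim_sym n (X Y : indec n) : ext1dim X Y = ext1dim Y X.
Proof. by rewrite /ext1dim addnC. Qed.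

Lemma wingE n (Tk Y : indec n) :
  in_wing Tk Y = (ql Tk <= n.-1) && (rpos (qpos Tk) Y + ql Y <= ql Tk).
Proof.
have Ht := qpos_lt Tk.
rewrite /in_wing; case: (ql Tk <= n.-1) => //=.
apply/existsP/idP => [[s /andP[Hs /eqP Hq]]|H].
  by rewrite (rpos_mk Ht (ltn_ord s) Hq).
exists (Ordinal (rpos_lt (qpos Tk) Y)) => /=; rewrite H /=.
by rewrite -qposE.
Qed.

Lemma wing_ql n (X Y : indec n) : in_wing X Y -> ql Y <= ql X.
Proof. by case/andP => _ /existsP[s /andP[H _]]; lia. Qed.

Lemma wing_trans n (Tk Y0 Tj : indec n) :
  in_wing Tk Y0 -> in_wing Y0 Tj -> in_wing Tk Tj.
Proof.
case/andP => Hb /existsP[s /andP[Hs /eqP Hq]].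
case/andP => _ /existsP[s' /andP[Hs' /eqP Hq']].
have := ql_gt0 Tj => Hl.
have Hlt : s + s' < n by have := ltn_ord s; lia.
rewrite /in_wing Hb; apply/existsP; exists (Ordinal Hlt) => /=.
apply/andP; split; first lia.
by rewrite Hq' Hq modnDml addnA.
Qed.

Lemma wing_sub n (Tk Y0 Tj : indec n) : in_wing Tk Y0 ->
  rpos (qpos Tk) Y0 <= rpos (qpos Tk) Tj ->
  rpos (qpos Tk) Tj + ql Tj <= rpos (qpos Tk) Y0 + ql Y0 -> in_wing Y0 Tj.
Proof.
rewrite wingE => /andP[Hb HY] H1 H2.
have Ht := qpos_lt Tk.
set t := qpos Tk in Ht HY H1 H2 *.
have Hlt : rpos t Tj - rpos t Y0 < n by have := rpos_lt t Tj; lia.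
rewrite /in_wing; apply/andP; split; first lia.
apply/existsP; exists (Ordinal Hlt) => /=; apply/andP; split; first lia.
rewrite (qposE Tj Ht) (qposE Y0 Ht) modnDml -addnA subnKC //.
Qed.

Lemma rigid_ql n (X : indec n) : 0 < n -> ext1dim X X = 0 -> ql X <= n.-1.
Proof.
move=> Hn H; rewrite leqNgt; apply/negP => Hlt.
have : 0 < homdim n (qpos X) (ql X) (tau_pos n (qpos X)) (ql X).
  apply/homdim_pos; exists n.-1 => //.
  by rewrite /tau_pos modn_mod eqxx leq_subr.
move: H; rewrite /ext1dim; lia.
Qed.

Lemma outside n (Tk X J : indec n) : in_wing Tk J -> ~~ in_wing Tk X ->
  ext1dim X Tk = 0 -> ext1dim X J = 0.
Proof.
rewrite !wingE => /andP[Hb HJ] HX.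
rewrite Hb /= -ltnNge in HX.
have Ht := qpos_lt Tk.
have r0 := rpos_self Tk.
set t := qpos Tk in Ht HJ HX r0 *.
have rX := rpos_lt t X. have rJ := rpos_lt t J.
rewrite /ext1dim => /eqP; rewrite addn_eq0 !eqn0Ngt => /andP[Ha Hb'].
apply/eqP; rewrite addn_eq0 !eqn0Ngt; apply/andP; split.
- apply/negP => /(hom_rel J X Ht) [j Hj /andP[/eqP Hm Hl]].
  have := @L2 n (rpos t J + j) (rpos t X + n.-1) ltac:(lia) ltac:(lia) Hm.
  move=> Hc.
  have E : rpos t X = rpos t J + j + 1 by lia.
  case: (leqP (ql Tk - (rpos t J + j)) (ql X)) => Hle; last lia.
  move/negP: Ha; apply; apply/(hom_rel Tk X Ht).
  exists (rpos t J + j); first lia.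
  by rewrite r0 add0n Hm eqxx Hle.
- apply/negP => /(hom_rel X J Ht) [j Hj /andP[/eqP Hm Hl]].
  case: (leqP (rpos t J) j) => Hjs.
    move/negP: Hb'; apply; apply/(hom_rel X Tk Ht).
    exists (j - rpos t J); first lia.
    apply/andP; split; last lia.
    rewrite r0 add0n -(eqn_modDr (rpos t J)).
    have -> : rpos t X + (j - rpos t J) + rpos t J = rpos t X + j by lia.
    by rewrite [n.-1 + _]addnC Hm.
  have := @L2 n (rpos t X + j) (rpos t J + n.-1) ltac:(lia) ltac:(lia) Hm.
  lia.
Qed.

Lemma mk_ex n s l : 0 < n -> 0 < l -> exists J : indec n, qpos J = s %% n /\ ql J = l.
Proof.
move=> Hn Hl. exists (exist (fun p : 'I_n * nat => 0 < p.2) (Ordinal (ltn_pmod s Hn), l) Hl).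
by split.
Qed.

Definition relF n (T : seq (indec n)) (Tk : indec n) :=
  map (fun Y => (rpos (qpos Tk) Y, ql Y)) (filter (in_wing Tk) T).

Lemma rel_inj n t (X Y : indec n) : t < n ->
  (rpos t X, ql X) = (rpos t Y, ql Y) -> X = Y.
Proof.
move=> Ht [E1 E2]; apply: indec_eq => //.
by rewrite (qposE X Ht) (qposE Y Ht) E1.
Qed.

Lemma relF_lfam n (T : seq (indec n)) Tk : uniq T ->
  (forall X Y, X \in T -> Y \in T -> ext1dim X Y = 0) ->
  lfam 0 (ql Tk) (relF T Tk).
Proof.
move=> Hu Hr. have Ht := qpos_lt Tk. split.
- rewrite map_inj_in_uniq ?filter_uniq // => X Y _ _; exact: rel_inj.
- apply/allP => p /mapP[Y]; rewrite mem_filter wingE => /andP[/andP[_ H] _] ->.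
  by rewrite /inseg /= H ql_gt0 andbT.
- move=> p q /mapP[Y]; rewrite mem_filter => /andP[HY YT] ->.
  move=> /mapP[X]; rewrite mem_filter => /andP[HX XT] ->.
  move: HY HX; rewrite !wingE => /andP[Hb H1] /andP[_ H2].
  by rewrite -(ext_rel Ht H1 H2 Hb) Hr.
Qed.

Lemma part1 n (T : seq (indec n)) (Tk : indec n) :
  2 <= n -> basic T -> maximal_rigid T -> Tk \in T ->
  count (in_wing Tk) T = ql Tk.
Proof.
move=> Hn Hu [Hrig Hmax] HTk.
have Hr : forall X Y, X \in T -> Y \in T -> ext1dim X Y = 0.
  by move=> X Y HX HY; move/allP: Hrig => /(_ X HX) /allP /(_ Y HY) /eqP.
have Hb : ql Tk <= n.-1 by apply: rigid_ql; [lia | exact: Hr].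
have Ht := qpos_lt Tk.
have HF := relF_lfam Tk Hu Hr.
have Hsz : size (relF T Tk) = count (in_wing Tk) T by rewrite size_map size_filter.
apply/eqP; rewrite eqn_leq -Hsz (bound HF) /= leqNgt; apply/negP => Hlt.
have [q [Hq1 Hq2 Hq3]] := extend HF Hlt.
move: Hq1; case: q Hq2 Hq3 => s l Hq2 Hq3; rewrite /inseg /= => /andP[Hsl Hl].
have [J [HJ1 HJ2]] := @mk_ex n (qpos Tk + s) l ltac:(lia) Hl.
have rJ : rpos (qpos Tk) J = s by apply: rpos_mk => //; lia.
have WJ : in_wing Tk J by rewrite wingE Hb rJ HJ2.
have HJX : forall X, X \in T -> ext1dim X J = 0.
  move=> X HX; case: (boolP (in_wing Tk X)) => HXw.
    apply/eqP; move: (HXw); rewrite wingE => /andP[_ H1].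
    rewrite (ext_rel Ht H1 (_ : _ <= ql Tk) Hb); last by rewrite rJ HJ2.
    rewrite rJ HJ2 lcompat_sym; apply: Hq3.
    by apply/mapP; exists X => //; rewrite mem_filter HXw.
  by apply: outside WJ HXw _; apply: Hr.
have HJJ : ext1dim J J = 0.
  apply/eqP; rewrite (ext_rel Ht (_ : _ <= ql Tk) (_ : _ <= ql Tk) Hb); try by rewrite rJ HJ2.
  exact: lcompat_refl.
have : in_add [:: J] T.
  apply: Hmax; apply/allP => X HX; apply/allP => Y HY.
  move: HX HY; rewrite !mem_cat !mem_seq1 => /orP[HX|/eqP->] /orP[HY|/eqP->].
  - by rewrite Hr.
  - by rewrite HJX.
  - by rewrite ext1dim_sym HJX.
  - by rewrite HJJ.
rewrite /in_add /= andbT => JT.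
move/negP: Hq2; apply; apply/mapP; exists J; first by rewrite mem_filter WJ.
by rewrite rJ HJ2.
Qed.

Lemma relF_get n (T : seq (indec n)) Tk r l : (r, l) \in relF T Tk ->
  exists y, [/\ y \in T, in_wing Tk y, rpos (qpos Tk) y = r & ql y = l].
Proof. by case/mapP => y; rewrite mem_filter => /andP[H1 H2] [-> ->]; exists y. Qed.

Lemma count_sub n (T : seq (indec n)) Tk y : 2 <= n -> basic T -> maximal_rigid T ->
  y \in T -> in_wing Tk y -> ql y < ql Tk ->
  count (fun Tj => [&& Tj != Tk, in_wing Tk Tj & in_wing y Tj]) T = ql y.
Proof.
move=> Hn Hu Hm Hy Wy Hlt. rewrite -(part1 Hn Hu Hm Hy).
apply: eq_in_count => x Hx /=.
case Hw: (in_wing y x); rewrite ?andbF ?andbT //.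
rewrite (wing_trans Wy Hw) andbT.
apply/eqP => E; move: Hw; rewrite E => /wing_ql; lia.
Qed.

Unset Implicit Arguments.
Set Strict Implicit.

Theorem lemma2p5 (n : nat) (T : seq (indec n)) (Tk : indec n) :
  2 <= n -> basic T -> maximal_rigid T -> Tk \in T ->
  count (in_wing Tk) T = ql Tk /\
  (1 < ql Tk ->
   exists Y Z : option (indec n),
     [/\ subwing_triple Tk Y Z,
         summand_or_zero T Y /\ summand_or_zero T Z,
         (forall Tj, Tj \in T -> Tj != Tk -> in_wing Tk Tj ->
            in_wingo Y Tj || in_wingo Z Tj),
         count (fun Tj => [&& Tj != Tk, in_wing Tk Tj & in_wingo Y Tj]) T = qlo Y &
         count (fun Tj => [&& Tj != Tk, in_wing Tk Tj & in_wingo Z Tj]) T = qlo Z]).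
Proof.
move=> Hn Hu Hm HTk.
have P1 := part1 Hn Hu Hm HTk.
split => // Hb1.
have [Hrig Hmax] := Hm.
have Hr : forall X Y, X \in T -> Y \in T -> ext1dim X Y = 0.
  by move=> X Y HX HY; move/allP: Hrig => /(_ X HX) /allP /(_ Y HY) /eqP.
have Hb : ql Tk <= n.-1 by apply: rigid_ql; [lia | exact: Hr].
have Ht := qpos_lt Tk.
have r0 := rpos_self Tk.
have HF := relF_lfam Tk Hu Hr.
have Hsz : size (relF T Tk) = ql Tk by rewrite size_map size_filter.
have WTk : in_wing Tk Tk. rewrite wingE r0 add0n leqnn andbT. exact: Hb.
have HbF : (0, ql Tk) \in relF T Tk.
  by apply/mapP; exists Tk; rewrite ?mem_filter ?WTk ?r0.
have [c [Hcb Hc1 Hc2 Hsplit]] := structure HF Hsz HbF.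
have [Yo HYo] : exists Yo : option (indec n),
    (c = 0 /\ Yo = None) \/ (exists2 y, Yo = Some y &
       [/\ y \in T, in_wing Tk y, rpos (qpos Tk) y = 0 & ql y = c]).
  case: (posnP c) => Hc; first by exists None; left.
  have [y [H1 H2 H3 H4]] := relF_get (Hc1 Hc).
  by exists (Some y); right; exists y.
have [Zo HZo] : exists Zo : option (indec n),
    (ql Tk - c - 1 = 0 /\ Zo = None) \/ (exists2 z, Zo = Some z &
       [/\ z \in T, in_wing Tk z, rpos (qpos Tk) z = c + 1 & ql z = ql Tk - c - 1]).
  case: (posnP (ql Tk - c - 1)) => Hc; first by exists None; left.
  have [z [H1 H2 H3 H4]] := relF_get (Hc2 Hc).
  by exists (Some z); right; exists z.
exists Yo, Zo; split.
-
  case: HYo => [[Hc ->]|[y -> [yT Wy ry qy]]];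
  case: HZo => [[Hz ->]|[z -> [zT Wz rz qz]]].
  + lia.
  + right; split; first lia. right; split => //. exists z => //; split; last lia.
    by rewrite (qposE z Ht) rz Hc.
  + right; split; first lia. left; split => //. exists y => //; split; last lia.
    by rewrite (qposE y Ht) ry addn0.
  + have Hc0 : 0 < c by rewrite -qy ql_gt0.
    have Hz0 : 0 < ql Tk - c - 1 by rewrite -qz ql_gt0.
    left; split; first by clear -Hb Hc0 Hz0; lia.
    exists c; split; first by clear -Hc0 Hz0; lia.
    * exists y => //; split => //. by rewrite (qposE y Ht) ry addn0.
    * exists z => //; split => //. by rewrite (qposE z Ht) rz addnA.
- by split; [case: HYo => [[_ ->]|[y -> [yT _ _ _]]] | case: HZo => [[_ ->]|[z -> [zT _ _ _]]]].
- move=> Tj Hj Hne Wj.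
  have Hin : (rpos (qpos Tk) Tj, ql Tj) \in relF T Tk by apply/mapP; exists Tj; rewrite ?mem_filter ?Wj.
  have Hne' : (rpos (qpos Tk) Tj, ql Tj) != (0, ql Tk).
    apply: contra Hne => /eqP E; apply/eqP; apply: (rel_inj Ht); by rewrite E r0.
  have Hq := ql_gt0 Tj.
  case/orP: (Hsplit _ Hin Hne'); rewrite /inseg /= => H.
  + case: HYo => [[Hc _]|[y -> [yT Wy ry qy]]]; first by clear -H Hc Hq; lia.
    by rewrite /= (wing_sub Wy) //; rewrite ?ry ?qy; clear -H; lia.
  + case: HZo => [[Hc _]|[z -> [zT Wz rz qz]]]; first by clear -H Hc Hq; lia.
    by rewrite /= orbC (wing_sub Wz) //; rewrite ?rz ?qz; clear -H; lia.
- case: HYo => [[_ ->]|[y -> [yT Wy ry qy]]].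
    by rewrite /=; apply/eqP; rewrite eqn0Ngt -has_count; apply/hasPn => x _; rewrite !andbF.
  by rewrite /= (count_sub Hn Hu Hm yT Wy) //; rewrite qy.
- case: HZo => [[_ ->]|[z -> [zT Wz rz qz]]].
    by rewrite /=; apply/eqP; rewrite eqn0Ngt -has_count; apply/hasPn => x _; rewrite !andbF.
  by rewrite /= (count_sub Hn Hu Hm zT Wz) //; rewrite qz; lia.
Qed.
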